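(* Let $(\Omega,+)$ be a group and $a,b,c$ subgroups such that $a\top b$ and $a,b$ commute elementwise. Then $(a,b,c)$ is a transversal triple (i.e. additionally $b\top c$ and $c\top a$) if and only if there is a group isomorphism $\Omega\cong a\times a$ under which $a$ corresponds to the first factor, $b$ to the second factor and $c$ to the diagonal. Moreover, in this case, the set $U'_{ab}:=U_{ab}\cap\mathit{Gras}(\Omega)$ is a torsor (subtorsor of $U_{ab}$) which, taking $c$ as base point, is isomorphic to the group $\mathrm{Aut}(a)$ of group automorphisms of $a$.
   Context: $(\Omega,+)$ is a group written additively but not necessarily abelian; $\mathit{Gras}(\Omega)$ is the set of subgroups. For subsets $x,y$, $x\top y$ means every $\omega\in\Omega$ has a unique decomposition $\omega=\xi+\eta$ with $\xi\in x,\eta\in y$. $U_{ab}$ is the set $\{x\subseteq\Omega: a\top x,\ x\top b\}$ with the torsor law $(x,y,z)\mapsto\Gamma(x,a,y,b,z)$, where $\Gamma(x,a,y,b,z)=\{\omega:\exists\alpha\in a,\beta\in b:\ \alpha+\omega+\beta\in y,\ \alpha+\omega\in z,\ \omega+\beta\in x\}$. A torsor with base point $c$ is regarded as the group with product $xz:=\Gamma(x,a,c,b,z)$ and neutral element $c$. *)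

(* Defs.v *)
(* A (not necessarily abelian) group written additively. *)
Set Implicit Arguments.
Unset Strict Implicit.

Record Grp := MkGrp {
  carrier :> Type;
  gadd : carrier -> carrier -> carrier;
  gzero : carrier;
  gopp : carrier -> carrier;
  gaddA : forall x y z, gadd x (gadd y z) = gadd (gadd x y) z;
  gadd0l : forall x, gadd gzero x = x;
  gaddNl : forall x, gadd (gopp x) x = gzero
}.

Arguments gadd {g} _ _.
Arguments gzero {g}.
Arguments gopp {g} _.

Declare Scope grp_scope.
Delimit Scope grp_scope with grp.
Infix "+" := gadd : grp_scope.
Local Open Scope grp_scope.

Definition subset (O : Grp) := O -> Prop.

Definition is_subgroup (O : Grp) (x : subset O) : Prop :=
  x gzero /\ (forall u v, x u -> x v -> x (u + v)) /\ (forall u, x u -> x (gopp u)).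

Definition top (O : Grp) (x y : subset O) : Prop :=
  forall w : O, exists xi eta, x xi /\ y eta /\ w = xi + eta /\
    (forall xi' eta', x xi' -> y eta' -> w = xi' + eta' -> xi' = xi /\ eta' = eta).

Definition Gamma (O : Grp) (x a y b z : subset O) : subset O :=
  fun w => exists alpha beta, a alpha /\ b beta /\
    y ((alpha + w) + beta) /\ z (alpha + w) /\ x (w + beta).

Definition U (O : Grp) (a b : subset O) : subset O -> Prop :=
  fun x => top a x /\ top x b.

Definition U' (O : Grp) (a b : subset O) : subset O -> Prop :=
  fun x => U a b x /\ is_subgroup x.

Definition is_hom_pair (O : Grp) (phi : O -> O * O) : Prop :=
  forall u v, phi (u + v) = (fst (phi u) + fst (phi v), snd (phi u) + snd (phi v)).

(* An automorphism of the subgroup a, represented by a map f : O -> O whose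
   restriction to a matters; two such maps are identified iff they agree on a. *)
Definition is_aut_of (O : Grp) (a : subset O) (f : O -> O) : Prop :=
  (forall u, a u -> a (f u)) /\
  (forall u v, a u -> a v -> f (u + v) = f u + f v) /\
  (forall v, a v -> exists u, a u /\ f u = v /\ (forall u', a u' -> f u' = v -> u' = u)).

(* Main.v *)
Require Import Defs.
From Stdlib Require Import ClassicalEpsilon FunctionalExtensionality PropExtensionality.
Local Open Scope grp_scope.

Lemma gidem {O : Grp} (e : O) : e + e = e -> e = gzero.
Proof. intro H. rewrite <- (gadd0l e) at 1. rewrite <- (gaddNl e), <- gaddA, H. reflexivity. Qed.

Lemma gaddNr {O : Grp} (x : O) : x + gopp x = gzero.
Proof. apply gidem. rewrite <- (gaddA x (gopp x) (x + gopp x)), (gaddA (gopp x) x (gopp x)), gaddNl, gadd0l. reflexivity. Qed.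

Lemma gadd0r {O : Grp} (x : O) : x + gzero = x.
Proof. rewrite <- (gaddNl x), gaddA, gaddNr, gadd0l. reflexivity. Qed.

Lemma gcancl {O : Grp} (z x y : O) : z + x = z + y -> x = y.
Proof. intro H. rewrite <- (gadd0l x), <- (gadd0l y), <- (gaddNl z), <- !gaddA, H. reflexivity. Qed.

Lemma gcancr {O : Grp} (z x y : O) : x + z = y + z -> x = y.
Proof. intro H. rewrite <- (gadd0r x), <- (gadd0r y), <- (gaddNr z), !gaddA, H. reflexivity. Qed.

Lemma gaddKl {O : Grp} (x y : O) : gopp x + (x + y) = y.
Proof. rewrite gaddA, gaddNl, gadd0l. reflexivity. Qed.
Lemma gaddKr {O : Grp} (x y : O) : x + (gopp x + y) = y.
Proof. rewrite gaddA, gaddNr, gadd0l. reflexivity. Qed.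

Lemma goppK {O : Grp} (x : O) : gopp (gopp x) = x.
Proof. apply (gcancl (gopp x)). rewrite gaddNr, gaddNl. reflexivity. Qed.

Lemma goppD {O : Grp} (x y : O) : gopp (x + y) = gopp y + gopp x.
Proof. apply (gcancl (x + y)). rewrite gaddNr, <- gaddA, gaddKr, gaddNr. reflexivity. Qed.

Lemma gopp0 {O : Grp} : gopp (@gzero O) = gzero.
Proof. rewrite <- (gadd0l (gopp gzero)). apply gaddNr. Qed.

Ltac gsimp := repeat (rewrite ?goppD, ?goppK, ?gopp0, ?gadd0l, ?gadd0r, ?gaddNl, ?gaddNr,
   <- ?gaddA, ?gaddKl, ?gaddKr).
Ltac gsimpin H := repeat (rewrite ?goppD, ?goppK, ?gopp0, ?gadd0l, ?gadd0r, ?gaddNl, ?gaddNr,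
   <- ?gaddA, ?gaddKl, ?gaddKr in H).

Lemma test (O:Grp) (x y z : O) : gopp (x + y) + ((x + (y + z)) + gzero) = z.
Proof. gsimp. reflexivity. Qed.

Definition coord {O : Grp} (a b c : subset O) (phi : O -> O * O) : Prop :=
       is_hom_pair phi /\
       (forall u v, phi u = phi v -> u = v) /\
       (forall w, a (fst (phi w)) /\ a (snd (phi w))) /\
       (forall p q, a p -> a q -> exists w, phi w = (p, q)) /\
       (forall w, a w <-> snd (phi w) = gzero) /\
       (forall w, b w <-> fst (phi w) = gzero) /\
       (forall w, c w <-> fst (phi w) = snd (phi w)).


Lemma cFD {O : Grp} {a b c phi} : @coord O a b c phi -> forall u v, fst (phi (u + v)) = fst (phi u) + fst (phi v).
Proof. intros [H _] u v. rewrite H. reflexivity. Qed.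
Lemma cSD {O : Grp} {a b c phi} : @coord O a b c phi -> forall u v, snd (phi (u + v)) = snd (phi u) + snd (phi v).
Proof. intros [H _] u v. rewrite H. reflexivity. Qed.
Lemma cinj {O : Grp} {a b c phi} : @coord O a b c phi -> forall u v,
  fst (phi u) = fst (phi v) -> snd (phi u) = snd (phi v) -> u = v.
Proof. intros [_ [H _]] u v H1 H2. apply H. destruct (phi u), (phi v). simpl in *. subst. reflexivity. Qed.
Lemma csurj {O : Grp} {a b c phi} : @coord O a b c phi -> forall p q, a p -> a q ->
  exists w, fst (phi w) = p /\ snd (phi w) = q.
Proof. intros [_ [_ [_ [H _]]]] p q Hp Hq. destruct (H p q Hp Hq) as [w Hw]. exists w. rewrite Hw. auto. Qed.
Lemma cFa {O : Grp} {a b c phi} : @coord O a b c phi -> forall w, a (fst (phi w)).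
Proof. intros [_ [_ [H _]]] w. apply H. Qed.
Lemma cSa {O : Grp} {a b c phi} : @coord O a b c phi -> forall w, a (snd (phi w)).
Proof. intros [_ [_ [H _]]] w. apply H. Qed.
Lemma ca {O : Grp} {a b c phi} : @coord O a b c phi -> forall w, a w <-> snd (phi w) = gzero.
Proof. intros [_ [_ [_ [_ [H _]]]]]. exact H. Qed.
Lemma cb {O : Grp} {a b c phi} : @coord O a b c phi -> forall w, b w <-> fst (phi w) = gzero.
Proof. intros [_ [_ [_ [_ [_ [H _]]]]]]. exact H. Qed.
Lemma cc {O : Grp} {a b c phi} : @coord O a b c phi -> forall w, c w <-> fst (phi w) = snd (phi w).
Proof. intros [_ [_ [_ [_ [_ [_ H]]]]]]. exact H. Qed.

Lemma sub_add {O : Grp} {a : subset O} : is_subgroup a -> forall u v, a u -> a v -> a (u + v).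
Proof. intros [_ [H _]]. exact H. Qed.
Lemma sub_opp {O : Grp} {a : subset O} : is_subgroup a -> forall u, a u -> a (gopp u).
Proof. intros [_ [_ H]]. exact H. Qed.
Lemma sub_0 {O : Grp} {a : subset O} : is_subgroup a -> a gzero.
Proof. intros [H _]. exact H. Qed.

Lemma coord_back {O : Grp} a b c phi : is_subgroup a -> @coord O a b c phi -> top b c /\ top c a.
Proof.
  intros Ha H.
  pose proof (cFD H) as FD. pose proof (cSD H) as SD. pose proof (cinj H) as inj.
  pose proof (csurj H) as surj. pose proof (cFa H) as Fa. pose proof (cSa H) as Sa.
  split; intro w; set (p := fst (phi w)); set (q := snd (phi w)).
  - destruct (surj p p (Fa w) (Fa w)) as [g [Hg1 Hg2]].
    destruct (surj gzero (q + gopp p) (sub_0 Ha) (sub_add Ha _ _ (Sa w) (sub_opp Ha _ (Fa w)))) as [be [Hb1 Hb2]].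
    exists be, g. split; [apply (cb H); exact Hb1|]. split; [apply (cc H); congruence|].
    split.
    + apply inj; rewrite ?FD, ?SD, ?Hg1, ?Hg2, ?Hb1, ?Hb2; unfold p, q; gsimp; reflexivity.
    + intros be' g' Hbe' Hg' E. apply (cb H) in Hbe'. apply (cc H) in Hg'.
      assert (E1 : p = fst (phi g')) by (unfold p; rewrite E, FD, Hbe'; gsimp; reflexivity).
      assert (E2 : q = snd (phi be') + snd (phi g')) by (unfold q; rewrite E, SD; reflexivity).
      assert (g' = g) by (apply inj; congruence).
      subst g'. split; [|reflexivity]. apply inj; [congruence|].
      rewrite Hb2, E2, Hg2. gsimp. reflexivity.
  - destruct (surj q q (Sa w) (Sa w)) as [g [Hg1 Hg2]].
    destruct (surj (gopp q + p) gzero (sub_add Ha _ _ (sub_opp Ha _ (Sa w)) (Fa w)) (sub_0 Ha)) as [al [Ha1 Ha2]].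
    exists g, al. split; [apply (cc H); congruence|]. split; [apply (ca H); exact Ha2|].
    split.
    + apply inj; rewrite ?FD, ?SD, ?Hg1, ?Hg2, ?Ha1, ?Ha2; unfold p, q; gsimp; reflexivity.
    + intros g' al' Hg' Hal' E. apply (ca H) in Hal'. apply (cc H) in Hg'.
      assert (E2 : q = snd (phi g')) by (unfold q; rewrite E, SD, Hal'; gsimp; reflexivity).
      assert (E1 : p = fst (phi g') + fst (phi al')) by (unfold p; rewrite E, FD; reflexivity).
      assert (g' = g) by (apply inj; congruence).
      subst g'. split; [reflexivity|]. apply inj; [|congruence].
      rewrite Ha1, E1, Hg1. gsimp. reflexivity.
Qed.

Lemma cF0 {O : Grp} {a b c phi} : @coord O a b c phi -> fst (phi gzero) = gzero.
Proof. intro H. apply gidem. rewrite <- (cFD H), gadd0l. reflexivity. Qed.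
Lemma cS0 {O : Grp} {a b c phi} : @coord O a b c phi -> snd (phi gzero) = gzero.
Proof. intro H. apply gidem. rewrite <- (cSD H), gadd0l. reflexivity. Qed.

Ltac sg := repeat first [ assumption | apply sub_0; assumption
  | eapply cFa; eassumption | eapply cSa; eassumption
  | apply sub_add; [assumption| |] | apply sub_opp; [assumption|] ].

Definition pa {O : Grp} (a b : subset O) (w : O) : O :=
  epsilon (inhabits gzero) (fun al => a al /\ b (gopp al + w)).
Definition pb {O : Grp} (a b : subset O) (w : O) : O := gopp (pa a b w) + w.

Lemma pa_spec {O : Grp} {a b : subset O} : top a b -> forall w,
  a (pa a b w) /\ b (pb a b w) /\ w = pa a b w + pb a b w.
Proof.
  intros T w. unfold pb.
  assert (H : a (pa a b w) /\ b (gopp (pa a b w) + w)).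
  { unfold pa. apply epsilon_spec. destruct (T w) as [x [y [Hx [Hy [E _]]]]].
    exists x. split; auto. rewrite E. gsimp. exact Hy. }
  destruct H as [H1 H2]. split; [exact H1|]. split; [exact H2|]. gsimp. reflexivity.
Qed.

Lemma top_uniq {O : Grp} {a b : subset O} : top a b -> forall {w x y x' y'},
  a x -> b y -> w = x + y -> a x' -> b y' -> w = x' + y' -> x = x' /\ y = y'.
Proof.
  intros T w x y x' y' Hx Hy E Hx' Hy' E'. destruct (T w) as [x0 [y0 [_ [_ [_ U]]]]].
  destruct (U x y Hx Hy E), (U x' y' Hx' Hy' E'). subst. auto.
Qed.

Lemma pa_uniq {O : Grp} {a b : subset O} : top a b -> forall w x y,
  a x -> b y -> w = x + y -> x = pa a b w /\ y = pb a b w.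
Proof.
  intros T w x y Hx Hy E. destruct (pa_spec T w) as [H1 [H2 H3]].
  exact (top_uniq T Hx Hy E H1 H2 H3).
Qed.

Lemma fwd {O : Grp} (a b c : subset O) :
  is_subgroup a -> is_subgroup b -> is_subgroup c -> top a b ->
  (forall alpha beta, a alpha -> b beta -> alpha + beta = beta + alpha) ->
  top b c -> top c a -> exists phi, coord a b c phi.
Proof.
  intros Ha Hb Hc Tab Com Tbc Tca.
  set (g := fun be => epsilon (inhabits gzero) (fun al => a al /\ c (al + be))).
  assert (gspec : forall be, b be -> a (g be) /\ c (g be + be)).
  { intros be Hbe. apply epsilon_spec. destruct (Tca be) as [ga [al [Hga [Hal [E _]]]]].
    exists (gopp al). split; [apply (sub_opp Ha _ Hal)|].
    rewrite (Com (gopp al) be) by sg. rewrite E. gsimp. exact Hga. }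
  assert (guniq : forall be al, b be -> a al -> c (al + be) -> al = g be).
  { intros be al Hbe Hal Hc1. destruct (gspec be Hbe) as [Hg1 Hg2].
    assert (E : forall x, a x -> be = (x + be) + gopp x).
    { intros x Hx. rewrite <- gaddA, <- (Com (gopp x) be) by sg. gsimp. reflexivity. }
    destruct (top_uniq Tca Hc1 (sub_opp Ha _ Hal) (E al Hal) Hg2 (sub_opp Ha _ Hg1) (E (g be) Hg1)) as [_ E2].
    rewrite <- (goppK al), E2, goppK. reflexivity. }
  assert (cb0 : forall be, b be -> c be -> be = gzero).
  { intros be Hbe Hcb.
    assert (E1 : be = be + gzero) by (gsimp; reflexivity).
    assert (E2 : be = gzero + be) by (gsimp; reflexivity).
    destruct (top_uniq Tbc Hbe (sub_0 Hc) E1 (sub_0 Hb) Hcb E2) as [E _]; exact E. }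
  assert (g0 : g gzero = gzero).
  { symmetry. apply guniq; sg. }
  assert (gD : forall b1 b2, b b1 -> b b2 -> g (b1 + b2) = g b1 + g b2).
  { intros b1 b2 H1 H2. destruct (gspec b1 H1) as [G1 C1]. destruct (gspec b2 H2) as [G2 C2].
    symmetry. apply guniq; [sg|sg|].
    replace (g b1 + g b2 + (b1 + b2)) with ((g b1 + b1) + (g b2 + b2)); [sg|].
    rewrite <- !gaddA. f_equal. rewrite !gaddA. f_equal. symmetry. apply Com; auto. }
  assert (ginj : forall b1 b2, b b1 -> b b2 -> g b1 = g b2 -> b1 = b2).
  { intros b1 b2 H1 H2 E. destruct (gspec b1 H1) as [G1 C1]. destruct (gspec b2 H2) as [G2 C2].
    rewrite E in C1.
    assert (Z : gopp b1 + b2 = gzero).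
    { apply cb0; [sg|].
      replace (gopp b1 + b2) with (gopp (g b2 + b1) + (g b2 + b2)) by (gsimp; reflexivity).
      sg. }
    apply (gcancl (gopp b1)). rewrite Z, gaddNl. reflexivity. }
  assert (gsurj : forall al, a al -> exists be, b be /\ g be = al).
  { intros al Hal. destruct (Tbc al) as [be [ga [Hbe [Hga [E _]]]]].
    exists (gopp be). split; [sg|]. symmetry. apply guniq; [sg|sg|].
    rewrite (Com al (gopp be)) by sg. rewrite E. gsimp. exact Hga. }
  pose proof (pa_spec Tab) as PS. pose proof (pa_uniq Tab) as PU.
  assert (paD : forall u v, pa a b (u + v) = pa a b u + pa a b v /\ pb a b (u + v) = pb a b u + pb a b v).
  { intros u v. destruct (PS u) as [A1 [B1 E1]]. destruct (PS v) as [A2 [B2 E2]].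
    symmetry in E1, E2.
    destruct (PU (u + v) (pa a b u + pa a b v) (pb a b u + pb a b v)) as [X Y]; sg.
    - rewrite <- E1 at 1. rewrite <- E2 at 1. rewrite <- !gaddA. f_equal. rewrite !gaddA. f_equal.
      symmetry. apply Com; auto.
    - auto. }
  exists (fun w => (pa a b w, g (pb a b w))).
  unfold coord. simpl. split; [|split; [|split; [|split; [|split; [|split]]]]].
  - intros u v. destruct (paD u v) as [X Y]. rewrite X, Y, gD; auto; apply PS.
  - intros u v E. injection E as E1 E2. apply ginj in E2; try apply PS.
    destruct (PS u) as [_ [_ Eu]]. destruct (PS v) as [_ [_ Ev]]. rewrite Eu, Ev, E1, E2. reflexivity.
  - intro w. split; [apply PS|]. apply gspec, PS.
  - intros p q Hp Hq. destruct (gsurj q Hq) as [be [Hbe E]].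
    exists (p + be). destruct (PU (p + be) p be Hp Hbe eq_refl) as [X Y].
    rewrite <- X, <- Y, E. reflexivity.
  - intro w. split.
    + intro Hw. destruct (PU w w gzero Hw (sub_0 Hb)) as [_ Y]; [gsimp; reflexivity|].
      rewrite <- Y. exact g0.
    + intro E. destruct (PS w) as [A1 [B1 E1]]. destruct (gspec _ B1) as [_ C1].
      rewrite E in C1. rewrite gadd0l in C1. rewrite (cb0 _ B1 C1) in E1. gsimpin E1.
      rewrite E1. exact A1.
  - intro w. split.
    + intro Hw. destruct (PU w gzero w (sub_0 Ha) Hw) as [X _]; [gsimp; reflexivity|].
      rewrite <- X. reflexivity.
    + intro E. destruct (PS w) as [A1 [B1 E1]]. rewrite E in E1. gsimpin E1. rewrite E1. exact B1.
  - intro w. split.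
    + intro Hw. destruct (PS w) as [A1 [B1 E1]]. apply guniq; auto. rewrite <- E1. exact Hw.
    + intro E. destruct (PS w) as [A1 [B1 E1]]. rewrite E1, E. apply gspec, B1.
Qed.

Lemma aut_a {O : Grp} {a : subset O} {f} : is_aut_of a f -> forall u, a u -> a (f u).
Proof. intros [H _]. exact H. Qed.
Lemma aut_D {O : Grp} {a : subset O} {f} : is_aut_of a f -> forall u v, a u -> a v -> f (u + v) = f u + f v.
Proof. intros [_ [H _]]. exact H. Qed.
Lemma aut_inj {O : Grp} {a : subset O} {f} : is_aut_of a f -> forall u v, a u -> a v -> f u = f v -> u = v.
Proof. intros [H1 [_ H]] u v Hu Hv E. destruct (H (f u) (H1 u Hu)) as [w [_ [_ U]]].
  rewrite (U u Hu eq_refl), (U v Hv (eq_sym E)). reflexivity. Qed.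
Lemma aut_surj {O : Grp} {a : subset O} {f} : is_aut_of a f -> forall v, a v -> exists u, a u /\ f u = v.
Proof. intros [_ [_ H]] v Hv. destruct (H v Hv) as [u [A [B _]]]. eauto. Qed.
Lemma aut_0 {O : Grp} {a : subset O} {f} : is_subgroup a -> is_aut_of a f -> f gzero = gzero.
Proof. intros Ha Hf. apply gidem. rewrite <- (aut_D Hf); sg. rewrite gadd0l. reflexivity. Qed.
Lemma aut_N {O : Grp} {a : subset O} {f} : is_subgroup a -> is_aut_of a f -> forall u, a u -> f (gopp u) = gopp (f u).
Proof. intros Ha Hf u Hu. apply (gcancr (f u)). rewrite <- (aut_D Hf); sg. rewrite !gaddNl. apply (aut_0 Ha Hf). Qed.

Lemma aut_id {O : Grp} (a : subset O) : is_aut_of a (fun u => u).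
Proof. split; [auto|split; [auto|]]. intros v Hv. exists v. auto. Qed.

Lemma aut_comp {O : Grp} {a : subset O} {f h} : is_aut_of a f -> is_aut_of a h -> is_aut_of a (fun u => f (h u)).
Proof.
  intros Hf Hh. split; [|split].
  - intros u Hu. apply (aut_a Hf), (aut_a Hh), Hu.
  - intros u v Hu Hv. rewrite (aut_D Hh) by auto. apply (aut_D Hf); apply (aut_a Hh); auto.
  - intros v Hv. destruct (aut_surj Hf v Hv) as [u1 [Hu1 E1]]. destruct (aut_surj Hh u1 Hu1) as [u [Hu E]].
    exists u. split; [auto|split; [congruence|]]. intros u' Hu' E'.
    apply (aut_inj Hh); auto. apply (aut_inj Hf); try apply (aut_a Hh); auto. congruence.
Qed.

Definition ainv {O : Grp} (a : subset O) (g : O -> O) (q : O) : O :=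
  epsilon (inhabits gzero) (fun t => a t /\ g t = q).

Lemma ainv_spec {O : Grp} {a : subset O} {g} : is_aut_of a g -> forall q, a q -> a (ainv a g q) /\ g (ainv a g q) = q.
Proof. intros Hg q Hq. unfold ainv. apply epsilon_spec. apply (aut_surj Hg q Hq). Qed.
Lemma ainv_uniq {O : Grp} {a : subset O} {g} : is_aut_of a g -> forall q t, a t -> g t = q -> t = ainv a g q.
Proof. intros Hg q t Ht E. assert (Hq : a q) by (rewrite <- E; apply (aut_a Hg); auto).
  destruct (ainv_spec Hg q Hq). apply (aut_inj Hg); auto. congruence. Qed.

Lemma aut_inv {O : Grp} {a : subset O} {g} : is_subgroup a -> is_aut_of a g -> is_aut_of a (ainv a g).
Proof.
  intros Ha Hg. split; [|split].
  - intros u Hu. apply (ainv_spec Hg u Hu).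
  - intros u v Hu Hv. destruct (ainv_spec Hg u Hu) as [A1 B1]. destruct (ainv_spec Hg v Hv) as [A2 B2].
    symmetry. apply (ainv_uniq Hg).
    + sg.
    + rewrite (aut_D Hg); congruence.
  - intros v Hv. exists (g v). split; [apply (aut_a Hg); auto|]. split.
    + symmetry. apply (ainv_uniq Hg); auto.
    + intros u' Hu' E. rewrite <- E. symmetry. apply (ainv_spec Hg u' Hu').
Qed.

Ltac prep H :=
  pose proof (cFD H) as FD; pose proof (cSD H) as SD; pose proof (cinj H) as inj;
  pose proof (csurj H) as surj; pose proof (cFa H) as Fa; pose proof (cSa H) as Sa.

Lemma graph_U' {O : Grp} {a b c : subset O} {phi} : is_subgroup a -> coord a b c phi ->
  forall f, is_aut_of a f -> forall X : subset O, (forall w, X w <-> fst (phi w) = f (snd (phi w))) ->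
  U' a b X.
Proof.
  intros Ha H f Hf X HX. prep H.
  assert (F0 : fst (phi gzero) = gzero).
  { apply gidem. rewrite <- FD, gadd0l. reflexivity. }
  assert (S0 : snd (phi gzero) = gzero).
  { apply gidem. rewrite <- SD, gadd0l. reflexivity. }
  assert (FN : forall u, fst (phi (gopp u)) = gopp (fst (phi u))).
  { intro u. apply (gcancr (fst (phi u))). rewrite <- FD, !gaddNl. exact F0. }
  assert (SN : forall u, snd (phi (gopp u)) = gopp (snd (phi u))).
  { intro u. apply (gcancr (snd (phi u))). rewrite <- SD, !gaddNl. exact S0. }
  split; [split|].
  -
    intro w. set (p := fst (phi w)). set (q := snd (phi w)).
    assert (Hp : a p) by apply Fa. assert (Hq : a q) by apply Sa.
    assert (Hfq : a (f q)) by (apply (aut_a Hf); auto).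
    destruct (surj (p + gopp (f q)) gzero) as [al [A1 A2]]; [sg|sg|].
    destruct (surj (f q) q Hfq Hq) as [xi [X1 X2]].
    exists al, xi. split; [apply (ca H); auto|]. split; [apply HX; congruence|]. split.
    + apply inj; rewrite ?FD, ?SD, ?A1, ?A2, ?X1, ?X2; unfold p, q; gsimp; reflexivity.
    + intros al' xi' Hal' Hxi' E. apply (ca H) in Hal'. apply HX in Hxi'.
      assert (E2 : q = snd (phi xi')) by (unfold q; rewrite E, SD, Hal'; gsimp; reflexivity).
      assert (E1 : p = fst (phi al') + fst (phi xi')) by (unfold p; rewrite E, FD; reflexivity).
      assert (xi' = xi) by (apply inj; congruence). subst xi'.
      split; [|reflexivity]. apply inj; [|congruence].
      rewrite A1, E1, X1. gsimp. reflexivity.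
  -
    intro w. set (p := fst (phi w)). set (q := snd (phi w)).
    assert (Hp : a p) by apply Fa. assert (Hq : a q) by apply Sa.
    destruct (aut_surj Hf p Hp) as [t [Ht Eft]].
    destruct (surj p t Hp Ht) as [xi [X1 X2]].
    destruct (surj gzero (gopp t + q)) as [be [B1 B2]]; [sg|sg|].
    exists xi, be. split; [apply HX; congruence|]. split; [apply (cb H); auto|]. split.
    + apply inj; rewrite ?FD, ?SD, ?B1, ?B2, ?X1, ?X2; unfold p, q; gsimp; reflexivity.
    + intros xi' be' Hxi' Hbe' E. apply (cb H) in Hbe'. apply HX in Hxi'.
      assert (E1 : p = fst (phi xi')) by (unfold p; rewrite E, FD, Hbe'; gsimp; reflexivity).
      assert (E2 : q = snd (phi xi') + snd (phi be')) by (unfold q; rewrite E, SD; reflexivity).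
      assert (E3 : snd (phi xi') = t) by (apply (aut_inj Hf); auto; congruence).
      assert (xi' = xi) by (apply inj; congruence). subst xi'.
      split; [reflexivity|]. apply inj; [congruence|].
      rewrite B2, E2, E3. gsimp. reflexivity.
  - split; [|split].
    + apply HX. rewrite F0, S0. symmetry. apply (aut_0 Ha Hf).
    + intros u v Hu Hv. apply HX in Hu. apply HX in Hv. apply HX.
      rewrite FD, SD, Hu, Hv, (aut_D Hf); auto.
    + intros u Hu. apply HX in Hu. apply HX. rewrite FN, SN, Hu, (aut_N Ha Hf); auto.
Qed.

Lemma U'_char {O : Grp} {a b c : subset O} {phi} : is_subgroup a -> coord a b c phi ->
  forall X, U' a b X -> exists f, is_aut_of a f /\ forall w, X w <-> fst (phi w) = f (snd (phi w)).
Proof.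
  intros Ha H X [[TaX TXb] HX]. prep H.
  assert (E1 : forall q, a q -> exists xi, X xi /\ snd (phi xi) = q).
  { intros q Hq. destruct (surj gzero q) as [w [W1 W2]]; [sg|sg|].
    destruct (TaX w) as [al [xi [Hal [Hxi [E _]]]]]. exists xi. split; auto.
    apply (ca H) in Hal. rewrite <- W2, E, SD, Hal. gsimp. reflexivity. }
  assert (E1u : forall x1 x2, X x1 -> X x2 -> snd (phi x1) = snd (phi x2) -> x1 = x2).
  { intros x1 x2 H1 H2 E.
    destruct (surj (fst (phi x1) + gopp (fst (phi x2))) gzero) as [al [A1 A2]]; [sg|sg|].
    assert (Ed : x1 = al + x2).
    { apply inj; rewrite ?FD, ?SD, ?A1, ?A2; gsimp; auto. }
    assert (Ed0 : x1 = gzero + x1) by (gsimp; reflexivity).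
    destruct (TaX x1) as [x0 [y0 [_ [_ [_ U]]]]].
    destruct (U gzero x1 (sub_0 Ha) H1 Ed0) as [_ Y1].
    destruct (U al x2 ltac:(apply (ca H); auto) H2 Ed) as [_ Y2]. congruence. }
  assert (E2 : forall p, a p -> exists xi, X xi /\ fst (phi xi) = p).
  { intros p Hp. destruct (surj p gzero) as [w [W1 W2]]; [sg|sg|].
    destruct (TXb w) as [xi [be [Hxi [Hbe [E _]]]]]. exists xi. split; auto.
    apply (cb H) in Hbe. rewrite <- W1, E, FD, Hbe. gsimp. reflexivity. }
  assert (E2u : forall x1 x2, X x1 -> X x2 -> fst (phi x1) = fst (phi x2) -> x1 = x2).
  { intros x1 x2 H1 H2 E.
    destruct (surj gzero (gopp (snd (phi x2)) + snd (phi x1))) as [be [B1 B2]]; [sg|sg|].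
    assert (Ed : x1 = x2 + be).
    { apply inj; rewrite ?FD, ?SD, ?B1, ?B2; gsimp; auto. }
    assert (Ed0 : x1 = x1 + gzero) by (gsimp; reflexivity).
    destruct (TXb x1) as [x0 [y0 [_ [_ [_ U]]]]].
    destruct (U _ _ H1 ltac:(apply (cb H); apply (cF0 H)) Ed0) as [Y1 _].
    destruct (U x2 be H2 ltac:(apply (cb H); auto) Ed) as [Y2 _]. congruence. }
  set (f := fun q => epsilon (inhabits gzero) (fun p => exists xi, X xi /\ fst (phi xi) = p /\ snd (phi xi) = q)).
  assert (fspec : forall xi, X xi -> f (snd (phi xi)) = fst (phi xi)).
  { intros xi Hxi.
    assert (Hs : exists xi', X xi' /\ fst (phi xi') = f (snd (phi xi)) /\ snd (phi xi') = snd (phi xi)).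
    { unfold f. apply (epsilon_spec (inhabits gzero) (fun p => exists xi0, X xi0 /\ fst (phi xi0) = p /\ snd (phi xi0) = snd (phi xi))).
      exists (fst (phi xi)), xi. auto. }
    destruct Hs as [xi' [Hx' [F' S']]]. rewrite <- F'. rewrite (E1u xi' xi); auto. }
  assert (chr : forall w, X w <-> fst (phi w) = f (snd (phi w))).
  { intro w. split.
    - intro Hw. symmetry. apply fspec, Hw.
    - intro Ew. destruct (E1 (snd (phi w)) (Sa w)) as [xi [Hxi Sxi]].
      replace w with xi; auto. apply inj; auto. rewrite Ew, <- Sxi. symmetry. apply fspec, Hxi. }
  exists f. split; [|exact chr]. split; [|split].
  - intros u Hu. destruct (E1 u Hu) as [xi [Hxi Sxi]]. rewrite <- Sxi, fspec; auto.
  - intros u v Hu Hv. destruct (E1 u Hu) as [x1 [Hx1 S1]]. destruct (E1 v Hv) as [x2 [Hx2 S2]].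
    assert (X (x1 + x2)) by sg.
    rewrite <- S1, <- S2, <- SD, !fspec, FD; auto.
  - intros v Hv. destruct (E2 v Hv) as [xi [Hxi Fxi]]. exists (snd (phi xi)). split; [apply Sa|].
    split; [rewrite fspec; auto|].
    intros u' Hu' Eu'. destruct (E1 u' Hu') as [x' [Hx' S']].
    rewrite <- S'. f_equal. f_equal. apply E2u; auto. rewrite Fxi, <- fspec, S'; auto.
Qed.

Lemma char_uniq {O : Grp} {a b c : subset O} {phi} : coord a b c phi ->
  forall (X : subset O) f g, (forall q, a q -> a (f q)) ->
  (forall w, X w <-> fst (phi w) = f (snd (phi w))) ->
  (forall w, X w <-> fst (phi w) = g (snd (phi w))) ->
  forall q, a q -> f q = g q.
Proof.
  intros H X f g Hf Xf Xg q Hq. destruct (csurj H (f q) q (Hf q Hq) Hq) as [w [W1 W2]].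
  assert (Xw : X w) by (apply Xf; congruence).
  apply Xg in Xw. congruence.
Qed.

Lemma gamma_char {O : Grp} {a b c : subset O} {phi} : is_subgroup a -> coord a b c phi ->
  forall (X Y Z : subset O) f g h, is_aut_of a f -> is_aut_of a g -> is_aut_of a h ->
  (forall w, X w <-> fst (phi w) = f (snd (phi w))) ->
  (forall w, Y w <-> fst (phi w) = g (snd (phi w))) ->
  (forall w, Z w <-> fst (phi w) = h (snd (phi w))) ->
  forall w, Gamma X a Y b Z w <-> fst (phi w) = f (ainv a g (h (snd (phi w)))).
Proof.
  intros Ha H X Y Z f g h Hf Hg Hh HX HY HZ w. prep H.
  set (p := fst (phi w)). set (q := snd (phi w)).
  assert (Hp : a p) by apply Fa. assert (Hq : a q) by apply Sa.
  assert (Hhq : a (h q)) by (apply (aut_a Hh); auto).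
  split.
  - intros [al [be [Hal [Hbe [Hy [Hz Hx]]]]]].
    apply (ca H) in Hal. apply (cb H) in Hbe. apply HX in Hx. apply HY in Hy. apply HZ in Hz.
    rewrite ?FD, ?SD, ?Hal, ?Hbe in Hx. rewrite ?FD, ?SD, ?Hal, ?Hbe in Hy. rewrite ?FD, ?SD, ?Hal, ?Hbe in Hz. fold p q in Hx, Hy, Hz. gsimpin Hx. gsimpin Hy. gsimpin Hz.
    assert (E : q + snd (phi be) = ainv a g (h q)).
    { apply (ainv_uniq Hg); [sg|]. congruence. }
    rewrite Hx, E. reflexivity.
  - intro Ew. destruct (ainv_spec Hg (h q) Hhq) as [Ht Egt].
    set (t := ainv a g (h q)) in *.
    destruct (csurj H gzero (gopp q + t)) as [be [B1 B2]]; [sg|sg|].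
    destruct (csurj H (h q + gopp p) gzero) as [al [A1 A2]]; [sg|sg|].
    exists al, be. split; [apply (ca H); auto|]. split; [apply (cb H); auto|].
    split; [|split].
    + apply HY. rewrite ?FD, ?SD, A1, A2, B1, B2. fold p q. gsimp. congruence.
    + apply HZ. rewrite ?FD, ?SD, A1, A2. fold p q. gsimp. reflexivity.
    + apply HX. rewrite ?FD, ?SD, B1, B2. fold p q. gsimp. exact Ew.
Qed.

Theorem theorem4p6 (O : Grp) (a b c : subset O) :
  is_subgroup a -> is_subgroup b -> is_subgroup c ->
  top a b ->
  (forall alpha beta, a alpha -> b beta -> alpha + beta = beta + alpha) ->
  ( (top b c /\ top c a) <->
    (exists phi : O -> O * O,
       is_hom_pair phi /\
       (forall u v, phi u = phi v -> u = v) /\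
       (forall w, a (fst (phi w)) /\ a (snd (phi w))) /\
       (forall p q, a p -> a q -> exists w, phi w = (p, q)) /\
       (forall w, a w <-> snd (phi w) = gzero) /\
       (forall w, b w <-> fst (phi w) = gzero) /\
       (forall w, c w <-> fst (phi w) = snd (phi w))) ) /\
  ( (top b c /\ top c a) ->
    U' a b c /\
    (forall x y z, U' a b x -> U' a b y -> U' a b z -> U' a b (Gamma x a y b z)) /\
    (exists Psi : subset O -> (O -> O),
       (forall x, U' a b x -> is_aut_of a (Psi x)) /\
       (forall x y, U' a b x -> U' a b y ->
          (forall u, a u -> Psi x u = Psi y u) -> x = y) /\
       (forall f, is_aut_of a f -> exists x, U' a b x /\ forall u, a u -> Psi x u = f u) /\
       (forall x z, U' a b x -> U' a b z ->
          forall u, a u -> Psi (Gamma x a c b z) u = Psi x (Psi z u))) ).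
Proof.
  intros Ha Hb Hc Tab Com.
  assert (P1 : (top b c /\ top c a) <-> exists phi, coord a b c phi).
  { split.
    - intros [T1 T2]. apply fwd; auto.
    - intros [phi H]. apply (coord_back a b c phi Ha H). }
  split; [exact P1|].
  intros T. destruct (proj1 P1 T) as [phi H].
  split; [|split].
  - apply (graph_U' Ha H (fun u => u) (aut_id a)). intro w. apply (cc H).
  - intros x y z Hx Hy Hz.
    destruct (U'_char Ha H x Hx) as [f [Hf Xf]].
    destruct (U'_char Ha H y Hy) as [g [Hg Yg]].
    destruct (U'_char Ha H z Hz) as [h [Hh Zh]].
    apply (graph_U' Ha H (fun q => f (ainv a g (h q)))).
    + apply aut_comp; auto. apply aut_comp; auto. apply aut_inv; auto.
    + apply (gamma_char Ha H); auto.
  - set (Psi := fun x : subset O => epsilon (inhabits (fun u : O => u))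
       (fun f => is_aut_of a f /\ forall w, x w <-> fst (phi w) = f (snd (phi w)))).
    assert (PsiS : forall x, U' a b x -> is_aut_of a (Psi x) /\
              forall w, x w <-> fst (phi w) = Psi x (snd (phi w))).
    { intros x Hx. unfold Psi. apply epsilon_spec. apply (U'_char Ha H x Hx). }
    exists Psi. split; [|split; [|split]].
    + intros x Hx. apply PsiS, Hx.
    + intros x y Hx Hy E. destruct (PsiS x Hx) as [Ax Cx]. destruct (PsiS y Hy) as [Ay Cy].
      apply functional_extensionality. intro w. apply propositional_extensionality.
      rewrite Cx, Cy, E by apply (cSa H). reflexivity.
    + intros f Hf. set (X := fun w => fst (phi w) = f (snd (phi w))).
      assert (HX : U' a b X) by (apply (graph_U' Ha H f Hf); intro w; reflexivity).
      exists X. split; [exact HX|]. destruct (PsiS X HX) as [AX CX].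
      intros u Hu. apply (char_uniq H X (Psi X) f (aut_a AX) CX); auto. intro w; reflexivity.
    + intros x z Hx Hz u Hu. destruct (PsiS x Hx) as [Ax Cx]. destruct (PsiS z Hz) as [Az Cz].
      pose proof (gamma_char Ha H x c z (Psi x) (fun u => u) (Psi z) Ax (aut_id a) Az Cx (cc H) Cz) as GC.
      assert (HG : U' a b (Gamma x a c b z)).
      { apply (graph_U' Ha H (fun q => Psi x (ainv a (fun u => u) (Psi z q)))); [|exact GC].
        apply aut_comp; auto. apply aut_comp; auto. apply aut_inv; auto. apply aut_id. }
      destruct (PsiS _ HG) as [AG CG].
      rewrite (char_uniq H _ _ (fun q => Psi x (ainv a (fun u => u) (Psi z q))) (aut_a AG) CG GC u Hu).
      f_equal. symmetry. apply (ainv_uniq (aut_id a)); [apply (aut_a Az); auto|reflexivity].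
Qed.
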